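(* Let $G$ be a connected bipartite graph with bipartition $(U,V)$, $|U|\ge|V|$. Let $V_W\subseteq V$ be the set of vertices of $V$ adjacent to a leaf, $\overline{V_W}=V\setminus V_W$, $U_L\subseteq U$ a set of leaves such that each $v\in V_W$ is adjacent to exactly one element of $U_L$ and $|U_L|=|V_W|$, and $\overline{U_L}=U\setminus U_L$. For $S\subseteq\overline{U_L}$ and $j\ge1$ let $g_j(S)$ be the number of independent sets $\mathcal C$ of $G$ with $|\mathcal C|=j$ and $\mathcal C\cap\overline{U_L}=S$, and $g(S)=\sum_{j=1}^{\alpha(G)}(-1)^{j-1}g_j(S)$. Suppose $\overline{V_W}\neq\emptyset$. Then $g(\emptyset)=1$, and for nonempty $S\subseteq \overline{U_L}$, $g(S)=(-1)^{|S|+|V_W|+1}$ if $N(S)=\overline{V_W}$ and $g(S)=0$ otherwise.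
   Context: A leaf is a vertex with exactly one neighbor. $N(S)$ is the set of vertices adjacent to some vertex of $S$. An independent set is a set of pairwise non-adjacent vertices; $\alpha(G)$ is the maximum size of one. *)

(* Defs.v *)
From mathcomp Require Import all_boot all_order all_algebra.
Set Implicit Arguments. Unset Strict Implicit. Unset Printing Implicit Defensive.
Import GRing.Theory Num.Theory.

Section GraphDefs.
Variables (T : finType) (e : rel T).

Definition simple_graph : Prop := symmetric e /\ irreflexive e.

Definition connected_graph : Prop := forall x y : T, connect e x y.

Definition bipartition (U V : {set T}) : Prop :=
  [/\ U :|: V = [set: T], U :&: V = set0 &
      forall x y, e x y -> (x \in U) && (y \in V) || (x \in V) && (y \in U)].

Definition leaf (x : T) : bool := #|[set y | e x y]| == 1%N.

Definition nbhd (S : {set T}) : {set T} := [set y | [exists x in S, e x y]].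

Definition independent (C : {set T}) : bool :=
  [forall x in C, forall y in C, ~~ e x y].

Definition alpha : nat := \max_(C : {set T} | independent C) #|C|.

Definition VW (V : {set T}) : {set T} := [set v in V | [exists u, e v u && leaf u]].

Definition gj (U UL : {set T}) (j : nat) (S : {set T}) : nat :=
  #|[set C : {set T} | [&& independent C, #|C| == j & C :&: (U :\: UL) == S]]|.

Definition g (U UL : {set T}) (S : {set T}) : int :=
  (\sum_(1 <= j < alpha.+1) (-1) ^+ j.-1 * (gj U UL j S)%:Z)%R.

End GraphDefs.

(* Main.v *)
Require Import Defs.
From mathcomp Require Import all_boot all_order all_algebra.
Import GRing.Theory Num.Theory.
Set Implicit Arguments. Unset Strict Implicit. Unset Printing Implicit Defensive.
Local Open Scope ring_scope.

Definition tog (T : finType) (x : T) (C : {set T}) : {set T} :=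
  if x \in C then C :\ x else x |: C.

Lemma togK (T : finType) (x : T) : involutive (@tog T x).
Proof.
move=> C; rewrite /tog; case xC: (x \in C).
  by rewrite !inE eqxx /= setD1K.
by rewrite !inE eqxx /= setU1K ?xC.
Qed.

Lemma in_tog (T : finType) (x y : T) C : y != x -> (y \in tog x C) = (y \in C).
Proof. by move=> yx; rewrite /tog; case: ifP; rewrite !inE (negbTE yx). Qed.

Lemma tog_sign (T : finType) (x : T) C :
  (-1) ^+ #|tog x C| = - (-1) ^+ #|C| :> int.
Proof.
rewrite /tog; case: ifP => xC.
  by rewrite [in RHS](cardsD1 x C) xC add1n exprS mulN1r opprK.
by rewrite cardsU1 xC add1n exprS mulN1r.
Qed.

Lemma tog_setI (T : finType) (x : T) (C A : {set T}) : x \notin A -> tog x C :&: A = C :&: A.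
Proof.
move=> xA; apply/setP=> y; rewrite !inE.
case: (eqVneq y x) => [->|yx]; first by rewrite (negbTE xA) !andbF.
by rewrite in_tog.
Qed.

Lemma tog_sub (T : finType) (x : T) (C A : {set T}) : x \notin A -> (A \subset tog x C) = (A \subset C).
Proof.
move=> xA; apply/subsetP/subsetP => H y yA; have yx : y != x by apply: contraNneq xA => <-.
  by rewrite -(in_tog C yx) H.
by rewrite in_tog // H.
Qed.

Lemma toggle0 (T : finType) (x : T) (P : pred {set T}) :
  (forall C, P (tog x C) = P C) ->
  \sum_(C | P C) (-1) ^+ #|C| = 0 :> int.
Proof.
move=> HP; set s := (X in X = _).
have : s = - s.
  rewrite {2}/s (reindex_inj (can_inj (togK x))) /=.
  rewrite -sumrN; apply: eq_big => C; first by rewrite HP.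
  by rewrite tog_sign opprK.
move/eqP; rewrite -subr_eq0 opprK -mulr2n -mulr_natr mulf_eq0 => /orP[/eqP //|].
by [].
Qed.

Lemma independentP (T : finType) (e : rel T) (C : {set T}) :
  reflect (forall x y, x \in C -> y \in C -> ~~ e x y) (independent e C).
Proof.
apply: (iffP forall_inP) => [H x y xC yC | H x xC].
  by move: (H x xC) => /forall_inP; apply.
by apply/forall_inP => y; apply: H.
Qed.

Lemma indep_del (T : finType) (e : rel T) (x : T) (C : {set T}) :
  simple_graph e -> (forall y, e x y -> y \notin C) ->
  independent e C = independent e (C :\ x).
Proof.
move=> [sym irr] Hx; apply/independentP/independentP => H a b aC bC.
  by apply: H; [move: aC | move: bC]; rewrite inE => /andP[].
case: (eqVneq a x) => [ax|ax].
  by apply/negP => eab; have := Hx b; rewrite -ax => /(_ eab); rewrite bC.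
case: (eqVneq b x) => [bx|bx].
  by apply/negP => eab; have := Hx a; rewrite -bx sym => /(_ eab); rewrite aC.
by apply: H; rewrite !inE ?ax ?bx.
Qed.

Definition Sig (T : finType) (e : rel T) (Ub S : {set T}) : int :=
  \sum_(C : {set T} | independent e C && (C :&: Ub == S)) (-1) ^+ #|C|.

Lemma indep0 (T : finType) (e : rel T) : independent e set0.
Proof. by apply/independentP => x y; rewrite inE. Qed.

Lemma g_Sig (T : finType) (e : rel T) (U UL S : {set T}) :
  g e U UL S = (S == set0)%:Z - Sig e (U :\: UL) S.
Proof.
set Q := fun C : {set T} => independent e C && (C :&: (U :\: UL) == S).
have Hj : forall j, (-1) ^+ j.-1 * (gj e U UL j S)%:Z =
    \sum_(C : {set T}) (if Q C && (#|C| == j) then (-1) ^+ (#|C|.-1) else 0).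
  move=> j; rewrite /gj -natz mulr_natr -sumr_const.
  rewrite (eq_bigl (fun C => Q C && (#|C| == j))); last first.
    by move=> C; rewrite inE /Q; case: (independent e C); rewrite //= andbC.
  by rewrite big_mkcond; apply: eq_bigr => C _; case: ifP => // /andP[_ /eqP->].
rewrite /g (eq_bigr _ (fun j _ => Hj j)).
rewrite exchange_big /=.
have HC : forall C : {set T}, \sum_(1 <= j < (alpha e).+1) (if Q C && (#|C| == j) then (-1) ^+ (#|C|.-1) else 0)
   = if (1 <= #|C| < (alpha e).+1)%N then (if Q C then (-1) ^+ (#|C|.-1) else 0) else 0 :> int.
  move=> C; rewrite (eq_bigr (fun j => if j == #|C| then (if Q C then (-1) ^+ (#|C|.-1) else 0) else 0)); last first.
    by move=> j _; rewrite eq_sym; case: (Q C); case: (_ == _).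
  by rewrite -big_mkcond big_nat1_eq.
rewrite (eq_bigr _ (fun C _ => HC C)).
rewrite /Sig (eq_bigr (fun C => if Q C then (C == set0)%:Z - (-1) ^+ #|C| else 0)); last first.
  move=> C _; case QC: (Q C); last by case: ifP.
  have Ca : (#|C| <= alpha e)%N.
    by rewrite /alpha; apply: (@leq_bigmax_cond _ (independent e) (fun C : {set T} => #|C|)); case/andP: QC.
  case: (posnP #|C|) => [C0|Cpos].
    by move/eqP: C0; rewrite cards_eq0 => /eqP ->; rewrite eqxx cards0 subrr.
  rewrite /= ltnS Ca.
  have -> : (C == set0) = false by apply/negP => /eqP C0; rewrite C0 cards0 in Cpos.
  by rewrite sub0r -(prednK Cpos) /= exprS mulN1r opprK.
rewrite -big_mkcond /= sumrB; congr (_ - _).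
rewrite big_mkcond (eq_bigr (fun C => if C == set0 then (S == set0)%:Z else 0)); last first.
  move=> C _; case: (eqVneq C set0) => [->|Cn0]; last by case: (Q C).
  by rewrite /Q indep0 set0I /= eq_sym; case: (S == set0).
by rewrite -big_mkcond big_pred1_eq.
Qed.

Lemma togD1 (T : finType) (x : T) (C : {set T}) : tog x C :\ x = C :\ x.
Proof.
apply/setP => y; rewrite !inE; case: (eqVneq y x) => //= yx.
by rewrite in_tog.
Qed.

Lemma indep_tog (T : finType) (e : rel T) (x : T) (C : {set T}) :
  simple_graph e -> (forall y, e x y -> y \notin C) ->
  independent e (tog x C) = independent e C.
Proof.
move=> sg Hx; rewrite (indep_del sg Hx) (@indep_del _ _ x) ?togD1 //.
move=> y exy; rewrite in_tog ?Hx //.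
by apply: contraTneq exy => ->; case: sg => _ ->.
Qed.

Definition SigD (T : finType) (e : rel T) (Ub W S D : {set T}) : int :=
  \sum_(C : {set T} | [&& independent e C, C :&: Ub == S & W :\: D \subset C]) (-1) ^+ #|C|.

Lemma leaf_nb (T : finType) (e : rel T) (u v y : T) :
  simple_graph e -> leaf e u -> e v u -> e u y -> y = v.
Proof.
move=> [sym _] /cards1P [z Hz] evu euy.
have : v \in [set y | e u y] by rewrite inE sym.
have : y \in [set y | e u y] by rewrite inE.
by rewrite Hz !inE => /eqP -> /eqP ->.
Qed.

Lemma SigD_step (T : finType) (e : rel T) (U V UL S : {set T}) :
  simple_graph e -> bipartition e U V -> UL \subset U ->
  (forall u, u \in UL -> leaf e u) ->
  (forall v, v \in VW e V -> #|[set u in UL | e v u]| = 1%N) ->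
  forall k (D : {set T}), D \subset VW e V -> #|D| = k ->
  SigD e (U :\: UL) (VW e V) S D = SigD e (U :\: UL) (VW e V) S set0.
Proof.
move=> sg [UV UIV Hb] ULU HL H7.
have disj : forall x, x \in U -> x \in V -> False.
  move=> x xU xV; have : x \in U :&: V by rewrite inE xU xV.
  by rewrite UIV inE.
elim=> [|k IH] D DW Dk.
  by move/eqP: Dk; rewrite cards_eq0 => /eqP ->.
have [v vD] : exists v, v \in D.
  by apply/set0Pn; rewrite -card_gt0 Dk.
have vW : v \in VW e V by apply: (subsetP DW).
have vV : v \in V by move: vW; rewrite inE => /andP[].
have [u Hu] := cards1P (introT eqP (H7 v vW)).
have : u \in [set u in UL | e v u] by rewrite Hu inE.
rewrite inE => /andP[uUL evu].
have uU : u \in U by apply: (subsetP ULU).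
have nbu : forall y, e u y -> y = v by move=> y; apply: leaf_nb sg (HL u uUL) evu.
rewrite -(IH (D :\ v)); last first.
- by rewrite (cardsD1 v D) vD in Dk; case: Dk.
- by apply: subset_trans DW; apply: subsetDl.
rewrite /SigD (bigID (fun C : {set T} => v \in C)) /=.
rewrite [X in _ + X](@toggle0 _ u); last first.
  move=> C.
  have uUb : u \notin U :\: UL by rewrite inE uUL.
  have uW : u \notin VW e V :\: D.
    by apply/negP; rewrite inE => /andP[_]; rewrite inE => /andP[uV _]; apply: disj uU uV.
  have vu : v != u by apply/negP => /eqP vu; apply: (disj u uU); rewrite -vu.
  rewrite tog_setI // tog_sub // in_tog //.
  case vC: (v \in C); rewrite ?andbF //=.
  rewrite indep_tog //.
  by move=> y /nbu ->; rewrite vC.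
rewrite addr0; apply: eq_bigl => C.
have -> : VW e V :\: (D :\ v) = v |: (VW e V :\: D).
  apply/setP => y; rewrite !inE; case: (eqVneq y v) => [->|yv] /=.
    by move: vW; rewrite inE => ->.
  by [].
by rewrite subUset sub1set; case: (v \in C); rewrite ?andbF ?andbT.
Qed.

Lemma Sig_val (T : finType) (e : rel T) (U V UL S : {set T}) :
  simple_graph e -> bipartition e U V -> UL \subset U ->
  (forall u, u \in UL -> leaf e u) ->
  (forall v, v \in VW e V -> #|[set u in UL | e v u]| = 1%N) ->
  S \subset U :\: UL ->
  Sig e (U :\: UL) S =
  if nbhd e S == V :\: VW e V then (-1) ^+ (#|S| + #|VW e V|) else 0.
Proof.
move=> sg bip ULU HL H7 SUb.
have step := SigD_step S sg bip ULU HL H7.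
have [sym irr] := sg.
case: bip => UV UIV Hb.
have disj : forall x, x \in U -> x \in V -> False.
  move=> x xU xV; have : x \in U :&: V by rewrite inE xU xV.
  by rewrite UIV inE.
set W := VW e V.
set Ub := U :\: UL.
have WV : W \subset V by apply/subsetP => x; rewrite inE => /andP[].
have SU : S \subset U by apply: subset_trans SUb (subsetDl _ _).
have ULW : forall x z, x \in UL -> e x z -> z \in W.
  move=> x z xUL exz; rewrite inE; apply/andP; split.
    by case/orP: (Hb _ _ exz) => /andP[] // xV _; case: (disj x) => //; apply: (subsetP ULU).
  by apply/existsP; exists x; rewrite sym exz HL.
have -> : Sig e Ub S = SigD e Ub W S W.
  by rewrite /Sig /SigD; apply: eq_bigl => C; rewrite setDv sub0set andbT.
rewrite (step _ W (subxx _) erefl) /SigD setD0.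
have CS : forall C : {set T}, C :&: Ub == S -> S \subset C.
  by move=> C /eqP <-; apply: subsetIl.
case: ifP => [/eqP NS | /negbT NS].
  rewrite (big_pred1 (S :|: W)); last first.
    move=> C /=; apply/idP/idP.
      case/and3P => iC CUb WC; rewrite eqEsubset subUset WC (CS _ CUb) !andbT.
      move/eqP: CUb => CUb.
      apply/subsetP => x xC.
      have : x \in U :|: V by rewrite UV inE.
      rewrite inE => /orP[xU|xV].
        case xUL: (x \in UL).
          have /cards1P [z Hz] := HL x xUL.
          have : z \in [set y | e x y] by rewrite Hz inE.
          rewrite inE => exz.
          have zC : z \in C by apply: (subsetP WC); apply: ULW exz.
          by move/independentP: iC => /(_ x z xC zC); rewrite exz.
        by rewrite inE -CUb !inE xUL xU xC.
      case xW: (x \in W); first by rewrite in_setU xW orbT.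
      have : x \in nbhd e S by rewrite NS inE xW xV.
      rewrite inE => /exists_inP [s sS esx].
      have sC : s \in C by rewrite -CUb in sS; move: sS; rewrite inE => /andP[].
      by move/independentP: iC => /(_ s x sC xC); rewrite esx.
    move=> /eqP ->; apply/and3P; split.
    - have UU : forall x y, x \in U -> y \in U -> ~~ e x y.
        move=> x y xU yU; apply/negP => /Hb /orP[] /andP[] => [_ yV | xV _].
          exact: disj yU yV.
        exact: disj xU xV.
      have VV : forall x y, x \in V -> y \in V -> ~~ e x y.
        move=> x y xV yV; apply/negP => /Hb /orP[] /andP[] => [xU _ | _ yU].
          exact: disj xU xV.
        exact: disj yU yV.
      have SW : forall s w, s \in S -> w \in W -> ~~ e s w.
        move=> s w sS wW; apply/negP => esw.
        have : w \in nbhd e S by rewrite inE; apply/exists_inP; exists s.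
        by rewrite NS in_setD wW.
      apply/independentP => x y; rewrite !in_setU => /orP[xS|xW] /orP[yS|yW].
      + by apply: UU; apply: (subsetP SU).
      + exact: SW.
      + by rewrite sym; apply: SW.
      + by apply: VV; apply: (subsetP WV).
    - apply/eqP/setP => x; rewrite in_setI in_setU; case xS: (x \in S) => /=.
        by rewrite (subsetP SUb).
      apply/negP => /andP[xW]; rewrite in_setD => /andP[_ xU].
      by apply: (disj x xU); apply: (subsetP WV).
    - exact: subsetUr.
  rewrite cardsU; have -> : S :&: W = set0.
    apply/setP => x; rewrite in_setI in_set0; apply/negP => /andP[xS xW].
    by apply: (disj x); [apply: (subsetP SU) | apply: (subsetP WV)].
  by rewrite cards0 subn0.
have nbV : forall s x, s \in S -> e s x -> x \in V.
  move=> s x sS esx; case/orP: (Hb _ _ esx) => /andP[] // sV _.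
  by case: (disj s) => //; apply: (subsetP SU).
move: NS; rewrite eqEsubset negb_and => /orP[] /subsetPn [x xN xnot].
  have xW : x \in W.
    move: xN xnot; rewrite inE in_setD => /exists_inP [s sS esx].
    by rewrite (nbV s x sS esx) andbT negbK.
  apply: big_pred0 => C; apply/negP => /and3P [iC CUb WC].
  move: xN; rewrite inE => /exists_inP [s sS esx].
  move/independentP: iC => /(_ s x (subsetP (CS _ CUb) s sS) (subsetP WC x xW)).
  by rewrite esx.
move: xN; rewrite in_setD => /andP[xnW xV].
apply: (@toggle0 _ x) => C.
have xUb : x \notin Ub by rewrite in_setD negb_and; apply/orP; right; apply/negP => xU; apply: disj xU xV.
rewrite tog_setI // tog_sub //.
case CUb: (C :&: Ub == S); rewrite /= ?andbF //.
rewrite indep_tog //.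
move=> y exy; apply/negP => yC.
have yU : y \in U.
  by case/orP: (Hb _ _ exy) => /andP[] // xU _; case: (disj x).
case yUL: (y \in UL).
  by move: (ULW y x yUL); rewrite sym exy (negbTE xnW) => /(_ isT).
have yS : y \in S by rewrite -(eqP CUb) in_setI yC in_setD yUL yU.
by move: xnot; rewrite inE; apply/negP; rewrite negbK; apply/exists_inP; exists y; rewrite // sym.
Qed.

Theorem lemma5p7 (T : finType) (e : rel T) (U V UL : {set T}) :
  simple_graph e ->
  connected_graph e ->
  bipartition e U V ->
  (#|V| <= #|U|)%N ->
  UL \subset U ->
  (forall u, u \in UL -> leaf e u) ->
  (forall v, v \in VW e V -> #|[set u in UL | e v u]| = 1%N) ->
  #|UL| = #|VW e V| ->
  V :\: VW e V != set0 ->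
  g e U UL set0 = 1%R /\
  (forall S : {set T}, S \subset U :\: UL -> S != set0 ->
     g e U UL S =
       (if nbhd e S == V :\: VW e V
        then (-1) ^+ (#|S| + #|VW e V| + 1)
        else 0)%R).
Proof.
move=> sg _ bip _ ULU HL H7 _ Vn0; split.
  rewrite g_Sig (Sig_val sg bip ULU HL H7 (sub0set _)).
  have -> : nbhd e set0 = set0.
    by apply/setP => x; rewrite in_set0 inE; apply/negbTE/exists_inP => -[y]; rewrite in_set0.
  by rewrite eq_sym (negbTE Vn0) eqxx subr0.
move=> S SUb Sn0.
rewrite g_Sig (Sig_val sg bip ULU HL H7 SUb) (negbTE Sn0) sub0r.
by case: ifP; rewrite ?oppr0 // addn1 exprS mulN1r.
Qed.
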